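(* Let $(A,\Delta,\Delta')$ be a commutative Hopf brace over a field $k$, with antipodes $S$ (for $\Delta$) and $T$ (for $\Delta'$). Define $\rho(a)=a_{(-1)}\otimes a_{(0)}:=S(a_1)a_{21'}\otimes a_{22'}$ and $\varphi(a)=a_{[0]}\otimes a_{[1]}:=T(a_{1'})_{(-1)}a_{2'}\otimes T(a_{1'})_{(0)}a_{3'}$ for $a\in A$. Then the map $$c:A\otimes A\to A\otimes A,\qquad c(x\otimes y)=x_{(-1)}y_{[0]}\otimes x_{(0)}y_{[1]}$$ is a solution of the braid equation $(c\otimes\mathrm{id})(\mathrm{id}\otimes c)(c\otimes\mathrm{id})=(\mathrm{id}\otimes c)(c\otimes\mathrm{id})(\mathrm{id}\otimes c)$ on $A\otimes A\otimes A$.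
   Context: All objects are over a field $k$. A Hopf brace $(A,\Delta,\Delta')$ consists of an algebra $(A,m,1)$ with two Hopf algebra structures $(A,m,1,\Delta,\varepsilon,S)$ and $(A,m,1,\Delta',\epsilon,T)$ on the same algebra such that for all $h\in A$: $h_{1'}\otimes h_{2'1}\otimes h_{2'2}=h_{11'}S(h_2)h_{31'}\otimes h_{12'}\otimes h_{32'}$. It is commutative if $A$ is commutative. Sweedler notation: $\Delta(h)=h_1\otimes h_2$, $\Delta'(h)=h_{1'}\otimes h_{2'}$, iterated $\Delta'$ written $h_{1'}\otimes h_{2'}\otimes h_{3'}$; $h_{21'}$ means $\Delta'$ applied to $h_2$. *)

(* Defs.v *)
(* Tensor products are not in the library: an element of
   A (x) A (resp. A (x) A (x) A) is represented by a finite list of pure tensors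
   (a finite sum), and two representatives are identified exactly when every
   bilinear (resp. trilinear) map into every k-vector space takes the same value
   on them (the universal property of the tensor product). *)
From HB Require Import structures.
From mathcomp Require Import all_boot all_order all_algebra.
Set Implicit Arguments. Unset Strict Implicit. Unset Printing Implicit Defensive.
Import GRing.Theory.
Local Open Scope ring_scope.

Section HopfBraceDefs.
Variable k : fieldType.

Definition islin (V W : lmodType k) (f : V -> W) : Prop :=
  forall (a : k) (u v : V), f (a *: u + v) = a *: f u + f v.

Definition lin2 (V U : lmodType k) (f : V -> V -> U) : Prop :=
  (forall y, islin (fun x => f x y)) /\ (forall x, islin (f x)).

Definition lin3 (V U : lmodType k) (f : V -> V -> V -> U) : Prop :=
  [/\ forall y z, islin (fun x => f x y z),
      forall x z, islin (fun y => f x y z) &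
      forall x y, islin (f x y)].

Definition teq2 (V : lmodType k) (s t : seq (V * V)) : Prop :=
  forall (U : lmodType k) (f : V -> V -> U), lin2 f ->
    \sum_(p <- s) f p.1 p.2 = \sum_(p <- t) f p.1 p.2.

Definition teq3 (V : lmodType k) (s t : seq (V * V * V)) : Prop :=
  forall (U : lmodType k) (f : V -> V -> V -> U), lin3 f ->
    \sum_(p <- s) f p.1.1 p.1.2 p.2 = \sum_(p <- t) f p.1.1 p.1.2 p.2.

Definition bind (X Y : Type) (s : seq X) (f : X -> seq Y) : seq Y :=
  flatten (map f s).

Section OnAlgebra.
Variable A : algType k.

(* (A, m, 1, D, e, S) is a Hopf algebra; D h is a representative of Delta(h). *)
Record is_hopf (D : A -> seq (A * A)) (e : A -> k) (S : A -> A) : Prop := {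
  hopf_D_lin : forall (a : k) (x y : A),
    teq2 (D (a *: x + y)) ([seq (a *: p.1, p.2) | p <- D x] ++ D y);
  hopf_e_lin : forall (a : k) (x y : A), e (a *: x + y) = a * e x + e y;
  hopf_S_lin : forall (a : k) (x y : A), S (a *: x + y) = a *: S x + S y;
  hopf_coass : forall h : A,
    teq3 (bind (D h) (fun p => [seq (p.1, q.1, q.2) | q <- D p.2]))
         (bind (D h) (fun p => [seq (q.1, q.2, p.2) | q <- D p.1]));
  hopf_counitl : forall h : A, \sum_(p <- D h) e p.1 *: p.2 = h;
  hopf_counitr : forall h : A, \sum_(p <- D h) e p.2 *: p.1 = h;
  hopf_D_mul : forall x y : A,
    teq2 (D (x * y)) (bind (D x) (fun p => [seq (p.1 * q.1, p.2 * q.2) | q <- D y]));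
  hopf_D_one : teq2 (D 1) [:: (1, 1)];
  hopf_e_mul : forall x y : A, e (x * y) = e x * e y;
  hopf_e_one : e 1 = 1;
  hopf_antipodel : forall h : A, \sum_(p <- D h) S p.1 * p.2 = (e h)%:A;
  hopf_antipoder : forall h : A, \sum_(p <- D h) p.1 * S p.2 = (e h)%:A
}.

Definition iter_cop (D : A -> seq (A * A)) (h : A) : seq (A * A * A) :=
  bind (D h) (fun p => [seq (p.1, q.1, q.2) | q <- D p.2]).

(* Hopf brace (A, D, D'):
   h1' (x) h2'1 (x) h2'2 = h11' S(h2) h31' (x) h12' (x) h32' *)
Definition hopf_brace (D : A -> seq (A * A)) (e : A -> k) (S : A -> A)
    (D' : A -> seq (A * A)) (e' : A -> k) (T : A -> A) : Prop :=
  [/\ is_hopf D e S, is_hopf D' e' T &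
      forall h : A,
        teq3 (bind (D' h) (fun p => [seq (p.1, q.1, q.2) | q <- D p.2]))
             (bind (iter_cop D h) (fun t =>
                bind (D' t.1.1) (fun r =>
                  [seq (r.1 * S t.1.2 * s.1, r.2, s.2) | s <- D' t.2])))].

Variables (D : A -> seq (A * A)) (S : A -> A) (D' : A -> seq (A * A)) (T : A -> A).

Definition hb_rho (a : A) : seq (A * A) :=
  bind (D a) (fun p => [seq (S p.1 * q.1, q.2) | q <- D' p.2]).

Definition hb_phi (a : A) : seq (A * A) :=
  bind (iter_cop D' a) (fun t =>
    [seq (r.1 * t.1.2, r.2 * t.2) | r <- hb_rho (T t.1.1)]).

Definition hb_c (x y : A) : seq (A * A) :=
  bind (hb_rho x) (fun r => [seq (r.1 * s.1, r.2 * s.2) | s <- hb_phi y]).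

Definition c12 (t : seq (A * A * A)) : seq (A * A * A) :=
  bind t (fun u => [seq (v.1, v.2, u.2) | v <- hb_c u.1.1 u.1.2]).
Definition c23 (t : seq (A * A * A)) : seq (A * A * A) :=
  bind t (fun u => [seq (u.1.1, v.1, v.2) | v <- hb_c u.1.2 u.2]).

End OnAlgebra.
End HopfBraceDefs.

(* Main.v *)
Require Import Defs.
From HB Require Import structures.
From mathcomp Require Import all_boot all_order all_algebra.
From mathcomp Require Import ring.
From Stdlib Require Import FunctionalExtensionality Setoid Morphisms.
Set Implicit Arguments. Unset Strict Implicit. Unset Printing Implicit Defensive.
Import GRing.Theory.
Local Open Scope ring_scope.

(* Proof strategy: continuation-passing (Sweedler) computations
   on finite sums, then an abstract "generators" argument for the braid relation. *)


Section Lin.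
Variable k : fieldType.
Implicit Types V W : lmodType k.

Lemma islin0 V W (f : V -> W) : islin f -> f 0 = 0.
Proof.
move=> h; have := h 1 0 0; rewrite !scale1r addr0 => /(congr1 (fun z => z - f 0)).
by rewrite subrr addrK => /esym.
Qed.

Lemma islinZ V W (f : V -> W) a u : islin f -> f (a *: u) = a *: f u.
Proof. by move=> h; have := h a u 0; rewrite addr0 (islin0 h) addr0. Qed.

Lemma islinD V W (f : V -> W) u v : islin f -> f (u + v) = f u + f v.
Proof. by move=> h; have := h 1 u v; rewrite !scale1r. Qed.

Lemma islin_sum V W (f : V -> W) I (r : seq I) (P : pred I) F : islin f ->
  f (\sum_(i <- r | P i) F i) = \sum_(i <- r | P i) f (F i).
Proof.
move=> h; apply: (big_morph f (fun u v => islinD u v h) (islin0 h)).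
Qed.

Lemma lin_id V : islin (fun x : V => x). Proof. by []. Qed.

Lemma lin_sum V W I (r : seq I) (F : V -> I -> W) :
  (forall i, islin (fun x => F x i)) -> islin (fun x => \sum_(i <- r) F x i).
Proof.
move=> h a u v; rewrite scaler_sumr -big_split /=; apply: eq_bigr => i _; exact: h.
Qed.

Lemma lin_scale V W (c : k) (F : V -> W) : islin F -> islin (fun x => c *: F x).
Proof. by move=> h a u v; rewrite h scalerDr !scalerA mulrC. Qed.

Lemma lin_scalar V W (phi : V -> k) (w : W) :
  (forall a x y, phi (a *: x + y) = a * phi x + phi y) -> islin (fun x => phi x *: w).
Proof. by move=> h a u v; rewrite h scalerDl scalerA. Qed.

Lemma lin_add V W (F G : V -> W) : islin F -> islin G -> islin (fun x => F x + G x).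
Proof.
move=> hF hG a u v; rewrite hF hG scalerDr.
by rewrite -!addrA; congr (_ + _); rewrite addrCA.
Qed.

Lemma lin_app V V' W (g : V' -> W) (P : V -> V') : islin g -> islin P -> islin (fun x => g (P x)).
Proof. by move=> hg hP a u v; rewrite hP hg. Qed.

Lemma lin2_1 V V' W (g : V' -> V' -> W) (P : V -> V') b : lin2 g -> islin P -> islin (fun x => g (P x) b).
Proof. by case=> h1 _ hP; apply: (lin_app (g := fun y => g y b)). Qed.
Lemma lin2_2 V V' W (g : V' -> V' -> W) (P : V -> V') a : lin2 g -> islin P -> islin (fun x => g a (P x)).
Proof. by case=> _ h2 hP; apply: (lin_app (g := g a)). Qed.
Lemma lin3_1 V V' W (g : V' -> V' -> V' -> W) (P : V -> V') b c : lin3 g -> islin P -> islin (fun x => g (P x) b c).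
Proof. by case=> h1 _ _ hP; apply: (lin_app (g := fun y => g y b c)). Qed.
Lemma lin3_2 V V' W (g : V' -> V' -> V' -> W) (P : V -> V') a c : lin3 g -> islin P -> islin (fun x => g a (P x) c).
Proof. by case=> _ h2 _ hP; apply: (lin_app (g := fun y => g a y c)). Qed.
Lemma lin3_3 V V' W (g : V' -> V' -> V' -> W) (P : V -> V') a b : lin3 g -> islin P -> islin (fun x => g a b (P x)).
Proof. by case=> _ _ h3 hP; apply: (lin_app (g := g a b)). Qed.

Variable A : comAlgType k.
Lemma lin_mull V (c : A) (P : V -> A) : islin P -> islin (fun x => c * P x).
Proof. by move=> h a u v; rewrite h mulrDr scalerAr. Qed.
Lemma lin_mulr V (c : A) (P : V -> A) : islin P -> islin (fun x => P x * c).
Proof. by move=> h a u v; rewrite h mulrDl scalerAl. Qed.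

End Lin.

Lemma big_bind (R : Type) (idx : R) (op : Monoid.com_law idx) (X Y : Type)
   (s : seq X) (F : X -> seq Y) (G : Y -> R) :
  \big[op/idx]_(y <- bind s F) G y = \big[op/idx]_(x <- s) \big[op/idx]_(y <- F x) G y.
Proof. by rewrite /bind big_flatten /= big_map. Qed.


#[export] Instance pw_proper {X Y Z : Type} (F : (X -> Y) -> Z) :
  Proper (pointwise_relation X eq ==> eq) F.
Proof. move=> g h E; congr F; exact: functional_extensionality. Qed.

Lemma sum_pair (R : Type) (idx : R) (op : Monoid.com_law idx) (X Y : Type)
  (s : seq (X * Y)) (G : X * Y -> R) :
  \big[op/idx]_(p <- s) G (p.1, p.2) = \big[op/idx]_(p <- s) G p.
Proof. by apply: eq_bigr => -[]. Qed.

Lemma xchg (k : fieldType) (U : lmodType k) (I J : Type) (r1 : seq I) (r2 : seq J)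
  (F : I -> J -> U) :
  \sum_(i <- r1) \sum_(j <- r2) F i j = \sum_(j <- r2) \sum_(i <- r1) F i j.
Proof. exact: exchange_big. Qed.

Lemma sum_bind (k : fieldType) (U : lmodType k) (X Y : Type) (s : seq X) (F : X -> seq Y)
  (G : Y -> U) :
  \sum_(y <- bind s F) G y = \sum_(x <- s) \sum_(y <- F x) G y.
Proof. exact: big_bind. Qed.

Section Hopf.
Variables (k : fieldType) (A : comAlgType k).
Variables (D : A -> seq (A * A)) (e : A -> k) (S : A -> A).
Hypothesis hH : is_hopf D e S.

Lemma S_islin : islin S.
Proof. move=> a x y; by have := hopf_S_lin hH a x y. Qed.
Lemma e_lin a x y : e (a *: x + y) = a * e x + e y.
Proof. by have := hopf_e_lin hH a x y. Qed.

Lemma sumD_lin (U : lmodType k) (G : A * A -> U) a x y :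
  lin2 (fun a b => G (a, b)) ->
  \sum_(p <- D (a *: x + y)) G p = a *: \sum_(p <- D x) G p + \sum_(p <- D y) G p.
Proof.
move=> hG; have := hopf_D_lin hH a x y hG; rewrite /= !sum_pair => ->.
rewrite big_cat big_map /= scaler_sumr; congr (_ + _).
apply: eq_bigr => -[u v] _ /=; case: hG => h1 _; exact: (islinZ _ _ (h1 v)).
Qed.

Lemma lin_sumD (V U : lmodType k) (G : A * A -> U) (P : V -> A) :
  lin2 (fun a b => G (a, b)) -> islin P -> islin (fun x => \sum_(q <- D (P x)) G q).
Proof. by move=> hG hP a u v; rewrite hP sumD_lin. Qed.

Lemma coassL (U : lmodType k) (G : A * A -> A * A -> U) h :
  (forall p q, G p q = G (p.1, 0) q) -> lin3 (fun a b c => G (a, 0) (b, c)) ->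
  \sum_(p <- D h) \sum_(q <- D p.2) G p q =
  \sum_(p <- D h) \sum_(q <- D p.1) G (q.1, 0) (q.2, p.2).
Proof.
move=> hi hG; have E := hopf_coass hH h hG; rewrite !big_bind /= in E.
setoid_rewrite big_map in E; simpl in E.
rewrite -[RHS]E; apply: eq_bigr => -[a b] _ /=; apply: eq_bigr => -[c d] _ /=; by rewrite hi.
Qed.

Lemma coassR (U : lmodType k) (G : A * A -> A * A -> U) h :
  (forall p q, G p q = G (0, p.2) q) -> lin3 (fun a b c => G (0, c) (a, b)) ->
  \sum_(p <- D h) \sum_(q <- D p.1) G p q =
  \sum_(p <- D h) \sum_(q <- D p.2) G (0, q.2) (p.1, q.1).
Proof.
move=> hi hG; have E := hopf_coass hH h hG; rewrite !big_bind /= in E.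
setoid_rewrite big_map in E; simpl in E.
rewrite [RHS]E; apply: eq_bigr => -[a b] _ /=; apply: eq_bigr => -[c d] _ /=; by rewrite hi.
Qed.

Lemma mulD (U : lmodType k) (G : A * A -> U) x y :
  lin2 (fun a b => G (a, b)) ->
  \sum_(p <- D (x * y)) G p = \sum_(p <- D x) \sum_(q <- D y) G (p.1 * q.1, p.2 * q.2).
Proof.
move=> hG; have := hopf_D_mul hH x y hG; rewrite /= sum_pair => ->.
by rewrite big_bind; setoid_rewrite big_map.
Qed.

Lemma oneD (U : lmodType k) (G : A * A -> U) :
  lin2 (fun a b => G (a, b)) -> \sum_(p <- D 1) G p = G (1, 1).
Proof.
by move=> hG; have := hopf_D_one hH hG; rewrite /= sum_pair => ->; rewrite big_seq1.
Qed.

Lemma counitL (U : lmodType k) (G : A * A -> U) h :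
  (forall p, G p = G (0, p.2)) -> islin (fun b => G (0, b)) ->
  \sum_(p <- D h) e p.1 *: G p = G (0, h).
Proof.
move=> hi hG; rewrite -{2}(hopf_counitl hH h) (islin_sum _ _ _ hG).
by apply: eq_bigr => p _; rewrite hi (islinZ _ _ hG).
Qed.

Lemma counitR (U : lmodType k) (G : A * A -> U) h :
  (forall p, G p = G (p.1, 0)) -> islin (fun b => G (b, 0)) ->
  \sum_(p <- D h) e p.2 *: G p = G (h, 0).
Proof.
move=> hi hG; rewrite -{2}(hopf_counitr hH h) (islin_sum _ _ _ hG).
by apply: eq_bigr => p _; rewrite hi (islinZ _ _ hG).
Qed.

Lemma antipL (U : lmodType k) (F : A -> U) h :
  islin F -> \sum_(p <- D h) F (S p.1 * p.2) = e h *: F 1.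
Proof.
move=> hF; by rewrite -(islin_sum _ _ _ hF) (hopf_antipodel hH h) (islinZ _ _ hF).
Qed.

Lemma antipR (U : lmodType k) (F : A -> U) h :
  islin F -> \sum_(p <- D h) F (p.1 * S p.2) = e h *: F 1.
Proof.
move=> hF; by rewrite -(islin_sum _ _ _ hF) (hopf_antipoder hH h) (islinZ _ _ hF).
Qed.

End Hopf.

Ltac eta_islin :=
  match goal with
  | |- islin ?f => lazymatch f with
                   | (fun _ => _) => fail
                   | _ => change (islin (fun x => f x)); cbv beta
                   end
  end.
Ltac lin_step :=
  match goal with
  | |- islin _ => eta_islin
  | |- lin2 _ => split => ? /=
  | |- lin3 _ => split => ? ? /=
  | |- islin (fun x => x) => exact: lin_id
  | |- _ => apply: lin_sum => ? /=
  | H : is_hopf _ _ _ |- _ => apply: (lin_sumD H)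
  | H : is_hopf _ _ ?S |- islin (fun x => ?S _) => apply: (lin_app (S_islin H))
  | |- _ => apply: lin_mull
  | |- _ => apply: lin_mulr
  | H : lin3 _ |- _ => apply: (lin3_1 _ _ H)
  | H : lin3 _ |- _ => apply: (lin3_2 _ _ H)
  | H : lin3 _ |- _ => apply: (lin3_3 _ _ H)
  | H : lin2 _ |- _ => apply: (lin2_1 _ H)
  | H : lin2 _ |- _ => apply: (lin2_2 _ H)
  | H : islin _ |- _ => apply: (lin_app H)
  | H : is_hopf _ ?e _ |- islin (fun x => ?e _ *: _) => apply: lin_scalar; apply: (e_lin H)
  | |- _ => apply: lin_scale
  | |- _ => apply: lin_add
  end.
Ltac lin := repeat lin_step.
Ltac side := solve [done | lin].


Section HopfMore.
Variables (k : fieldType) (A : comAlgType k).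
Variables (D : A -> seq (A * A)) (e : A -> k) (S : A -> A).
Hypothesis hH : is_hopf D e S.

Lemma S_one : S 1 = 1.
Proof.
have := antipL hH (F := fun w => w) 1 (@lin_id _ _) => /=.
rewrite (oneD hH (G := fun p => (S p.1 * p.2))) /=; last by lin.
by rewrite (hopf_e_one hH) scale1r mulr1.
Qed.

Lemma S_mul x y : S (x * y) = S x * S y.
Proof.
pose M := \sum_(p <- D x) \sum_(a <- D p.2) \sum_(q <- D y) \sum_(b <- D q.2)
   S (p.1 * q.1) * (a.1 * b.1) * (S a.2 * S b.2).
transitivity M.
  rewrite -(counitR hH (G := fun p => S p.1) (x * y)) //; last by lin.
  rewrite (mulD hH (G := fun p => e p.2 *: S p.1)) /=; last by lin.
  symmetry; rewrite /M.
  have E : forall u v w z t : A, u * (v * w) * (z * t) = u * (v * z) * (w * t).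
    by move=> *; ring.
  setoid_rewrite E.
  under [LHS]eq_bigr => p _.
    under eq_bigr => a _.
      under eq_bigr => q _.
        rewrite (antipR hH (F := fun w => S (p.1 * q.1) * (a.1 * S a.2) * w)); last by lin.
      over.
    over.
  over. simpl.
  under [LHS]eq_bigr => p _ do
    [rewrite (antipR hH (F := fun w => \sum_(q <- D y) e q.2 *: (S (p.1 * q.1) * w * 1))); last by lin].
  apply: eq_bigr => p _; rewrite scaler_sumr; apply: eq_bigr => q _.
  by rewrite (hopf_e_mul hH) !mulr1 scalerA.
rewrite /M.
setoid_rewrite (coassL hH); try side.
setoid_rewrite (coassL hH); try side.
simpl.
under [LHS]eq_bigr => p _ do rewrite xchg.
under [LHS]eq_bigr => p _ do under eq_bigr => q _ do
  [rewrite -(mulD hH (G := fun r => S r.1 * r.2 * (S p.2 * S q.2))); last by lin].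
under [LHS]eq_bigr => p _ do under eq_bigr => q _ do
  [rewrite (antipL hH (F := fun w => w * (S p.2 * S q.2))); last by lin].
rewrite -(counitL hH (G := fun p => S p.2) x) //; last by lin.
rewrite -(counitL hH (G := fun p => S p.2) y) //; last by lin.
rewrite mulr_suml; apply: eq_bigr => p _; rewrite mulr_sumr; apply: eq_bigr => q _.
by rewrite (hopf_e_mul hH) mul1r -scalerAl -scalerAr scalerA.
Qed.
End HopfMore.


Section Brace1.
Variables (k : fieldType) (A : comAlgType k).
Variables (D : A -> seq (A * A)) (e : A -> k) (S : A -> A).
Variables (D' : A -> seq (A * A)) (e' : A -> k) (T : A -> A).
Hypothesis hH : is_hopf D e S.
Hypothesis hH' : is_hopf D' e' T.

Local Notation rho := (hb_rho D S D').
Local Notation phi := (hb_phi D S D' T).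
Local Notation cc := (hb_c D S D' T).

Lemma sum_rho (U : lmodType k) (G : A * A -> U) a :
  \sum_(w <- rho a) G w = \sum_(p <- D a) \sum_(q <- D' p.2) G (S p.1 * q.1, q.2).
Proof. by rewrite /hb_rho big_bind; apply: eq_bigr => p _; rewrite big_map. Qed.

Lemma sum_phi (U : lmodType k) (G : A * A -> U) a :
  \sum_(w <- phi a) G w =
  \sum_(p <- D' a) \sum_(q <- D' p.2) \sum_(r <- rho (T p.1)) G (r.1 * q.1, r.2 * q.2).
Proof.
rewrite /hb_phi /iter_cop !big_bind; apply: eq_bigr => p _.
rewrite big_map; apply: eq_bigr => q _; by rewrite big_map.
Qed.

Lemma sum_c (U : lmodType k) (G : A * A -> U) x y :
  \sum_(w <- cc x y) G w = \sum_(r <- rho x) \sum_(s <- phi y) G (r.1 * s.1, r.2 * s.2).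
Proof. by rewrite /hb_c big_bind; apply: eq_bigr => p _; rewrite big_map. Qed.

Lemma lin_rho (V U : lmodType k) (G : A * A -> U) (P : V -> A) :
  lin2 (fun a b => G (a, b)) -> islin P -> islin (fun x => \sum_(w <- rho (P x)) G w).
Proof.
move=> hG hP; apply: (lin_app (g := fun x => \sum_(w <- rho x) G w)) => //.
have h : islin (fun x => \sum_(p <- D x) \sum_(q <- D' p.2) G (S p.1 * q.1, q.2)) by lin.
by move=> a u v; rewrite !sum_rho; apply: h.
Qed.

Lemma lin_phi (V U : lmodType k) (G : A * A -> U) (P : V -> A) :
  lin2 (fun a b => G (a, b)) -> islin P -> islin (fun x => \sum_(w <- phi (P x)) G w).
Proof.
move=> hG hP; apply: (lin_app (g := fun x => \sum_(w <- phi x) G w)) => //.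
have h : islin (fun x => \sum_(p <- D' x) \sum_(q <- D' p.2) \sum_(r <- rho (T p.1))
     G (r.1 * q.1, r.2 * q.2)).
  by repeat (first [lin_step | apply: lin_rho]).
by move=> a u v; rewrite !sum_phi; apply: h.
Qed.

Lemma lin_c1 (V U : lmodType k) (G : A * A -> U) (P : V -> A) y :
  lin2 (fun a b => G (a, b)) -> islin P -> islin (fun x => \sum_(w <- cc (P x) y) G w).
Proof.
move=> hG hP; apply: (lin_app (g := fun x => \sum_(w <- cc x y) G w)) => //.
have h : islin (fun x => \sum_(r <- rho x) \sum_(s <- phi y) G (r.1 * s.1, r.2 * s.2)).
  by repeat (first [lin_step | apply: lin_rho | apply: lin_phi]).
by move=> a u v; rewrite !sum_c; apply: h.
Qed.

Lemma lin_c2 (V U : lmodType k) (G : A * A -> U) (P : V -> A) x :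
  lin2 (fun a b => G (a, b)) -> islin P -> islin (fun y => \sum_(w <- cc x (P y)) G w).
Proof.
move=> hG hP; apply: (lin_app (g := fun y => \sum_(w <- cc x y) G w)) => //.
have h : islin (fun y => \sum_(r <- rho x) \sum_(s <- phi y) G (r.1 * s.1, r.2 * s.2)).
  by repeat (first [lin_step | apply: lin_rho | apply: lin_phi]).
by move=> a u v; rewrite !sum_c; apply: h.
Qed.

End Brace1.

Ltac lin_step_b :=
  match goal with
  | H1 : is_hopf _ _ _, H2 : is_hopf _ _ _ |- _ => apply: (lin_rho H1 H2)
  | H1 : is_hopf _ _ _, H2 : is_hopf _ _ _ |- _ => apply: (lin_phi H1 H2)
  | H1 : is_hopf _ _ _, H2 : is_hopf _ _ _ |- _ => apply: (lin_c1 H1 H2)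
  | H1 : is_hopf _ _ _, H2 : is_hopf _ _ _ |- _ => apply: (lin_c2 H1 H2)
  end.
Ltac linb := repeat (first [lin_step | lin_step_b]).
Ltac sideb := solve [done | linb].


Section Brace2.
Variables (k : fieldType) (A : comAlgType k).
Variables (D : A -> seq (A * A)) (e : A -> k) (S : A -> A).
Variables (D' : A -> seq (A * A)) (e' : A -> k) (T : A -> A).
Hypothesis hH : is_hopf D e S.
Hypothesis hH' : is_hopf D' e' T.

Local Notation rho := (hb_rho D S D').
Local Notation phi := (hb_phi D S D' T).
Local Notation cc := (hb_c D S D' T).

Variable U : lmodType k.

Lemma rho_one (G : A * A -> U) : lin2 (fun a b => G (a, b)) ->
  \sum_(w <- rho 1) G w = G (1, 1).
Proof.
move=> hG; rewrite (sum_rho _ _ _ G) (oneD hH (G := fun p => \sum_(q <- D' p.2) G (S p.1 * q.1, q.2))) /=; last by linb.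
rewrite (S_one hH); under eq_bigr do rewrite mul1r.
by rewrite (oneD hH' (G := fun q => G (q.1, q.2))).
Qed.

Lemma rho_mul (G : A * A -> U) x y : lin2 (fun a b => G (a, b)) ->
  \sum_(w <- rho (x * y)) G w = \sum_(u <- rho x) \sum_(v <- rho y) G (u.1 * v.1, u.2 * v.2).
Proof.
move=> hG; rewrite sum_rho (mulD hH); last by linb.
setoid_rewrite (mulD hH'); try sideb.
rewrite sum_rho; setoid_rewrite sum_rho; simpl.
under [RHS]eq_bigr => p _ do rewrite xchg.
apply: eq_bigr => p _; apply: eq_bigr => q _; apply: eq_bigr => a _; apply: eq_bigr => b _.
by rewrite (S_mul hH); congr (G (_, _)); ring.
Qed.

Lemma phi_one (G : A * A -> U) : lin2 (fun a b => G (a, b)) ->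
  \sum_(w <- phi 1) G w = G (1, 1).
Proof.
move=> hG; rewrite sum_phi (oneD hH'); last by linb.
rewrite /= (oneD hH'); last by linb.
by rewrite /= (S_one hH') (rho_one (G := fun r => G (r.1 * 1, r.2 * 1))) /= ?mulr1 //; linb.
Qed.

Lemma phi_mul (G : A * A -> U) x y : lin2 (fun a b => G (a, b)) ->
  \sum_(w <- phi (x * y)) G w = \sum_(u <- phi x) \sum_(v <- phi y) G (u.1 * v.1, u.2 * v.2).
Proof.
move=> hG; rewrite sum_phi (mulD hH'); last by linb.
setoid_rewrite (mulD hH'); try sideb.
setoid_rewrite (S_mul hH').
setoid_rewrite rho_mul; try sideb.
rewrite sum_phi; setoid_rewrite sum_phi; simpl.
under [RHS]eq_bigr => a _ do under eq_bigr => q _ do rewrite xchg.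
under [RHS]eq_bigr => a _ do rewrite xchg.
under [RHS]eq_bigr => a _ do under eq_bigr => b _ do under eq_bigr => q _ do rewrite xchg.
do 6 (apply: eq_bigr => ? _).
by congr (G (_, _)); ring.
Qed.



Lemma c_mul (G : A * A -> U) x x' y y' : lin2 (fun a b => G (a, b)) ->
  \sum_(w <- cc (x * x') (y * y')) G w =
  \sum_(v <- cc x y) \sum_(v' <- cc x' y') G (v.1 * v'.1, v.2 * v'.2).
Proof.
move=> hG; rewrite sum_c rho_mul; last by linb.
setoid_rewrite phi_mul; try sideb.
rewrite sum_c; setoid_rewrite sum_c; simpl.
under [RHS]eq_bigr => a _ do rewrite xchg.
do 4 (apply: eq_bigr => ? _).
by congr (G (_, _)); ring.
Qed.

Lemma c_unit_r (G : A * A -> U) x : lin2 (fun a b => G (a, b)) ->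
  \sum_(w <- cc x 1) G w = \sum_(w <- rho x) G w.
Proof.
move=> hG; rewrite sum_c; setoid_rewrite phi_one; try sideb.
by apply: eq_bigr => -[a b] _ /=; rewrite !mulr1.
Qed.

Lemma c_unit_l (G : A * A -> U) y : lin2 (fun a b => G (a, b)) ->
  \sum_(w <- cc 1 y) G w = \sum_(w <- phi y) G w.
Proof.
move=> hG; rewrite sum_c rho_one /=; last by linb.
by apply: eq_bigr => -[a b] _ /=; rewrite !mul1r.
Qed.

Lemma c_unit_11 (G : A * A -> U) : lin2 (fun a b => G (a, b)) ->
  \sum_(w <- cc 1 1) G w = G (1, 1).
Proof. by move=> hG; rewrite c_unit_r // rho_one. Qed.

End Brace2.


Section Brace3.
Variables (k : fieldType) (A : comAlgType k).
Variables (D : A -> seq (A * A)) (e : A -> k) (S : A -> A).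
Variables (D' : A -> seq (A * A)) (e' : A -> k) (T : A -> A).
Hypothesis hH : is_hopf D e S.
Hypothesis hH' : is_hopf D' e' T.

Local Notation rho := (hb_rho D S D').
Local Notation phi := (hb_phi D S D' T).
Local Notation cc := (hb_c D S D' T).

Variable U : lmodType k.

Lemma g3 (G : A * A -> U) b : lin2 (fun a b => G (a, b)) ->
  \sum_(r <- D b) \sum_(v <- rho r.2) G (r.1 * v.1, v.2) = \sum_(s <- D' b) G s.
Proof.
move=> hG; setoid_rewrite sum_rho; simpl.
rewrite (coassL hH); try sideb; simpl.
under [LHS]eq_bigr => r _ do rewrite xchg.
setoid_rewrite mulrA.
under [LHS]eq_bigr => r _ do under eq_bigr => n _ do
  [rewrite (antipR hH (F := fun w => G (w * n.1, n.2))); last by linb].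
under [LHS]eq_bigr => r _ do rewrite -scaler_sumr.
rewrite (counitL hH (G := fun r => \sum_(i <- D' r.2) G (1 * i.1, i.2))) //; last by linb.
by rewrite /= -[RHS]sum_pair; under eq_bigr do rewrite mul1r.
Qed.

Hypothesis hB : forall h : A,
  teq3 (bind (D' h) (fun p => [seq (p.1, q.1, q.2) | q <- D p.2]))
       (bind (iter_cop D h) (fun t =>
          bind (D' t.1.1) (fun r => [seq (r.1 * S t.1.2 * s.1, r.2, s.2) | s <- D' t.2]))).

Lemma braceL (G : A * A -> A * A -> U) h :
  (forall p q, G p q = G (p.1, 0) q) -> lin3 (fun a b c => G (a, 0) (b, c)) ->
  \sum_(p <- D' h) \sum_(q <- D p.2) G p q =
  \sum_(p <- D h) \sum_(q <- D p.2) \sum_(r <- D' p.1) \sum_(s <- D' q.2)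
     G (r.1 * S q.1 * s.1, 0) (r.2, s.2).
Proof.
move=> hi hG; have E := hB h hG; rewrite /iter_cop !big_bind /= in E.
setoid_rewrite big_map in E; simpl in E.
setoid_rewrite sum_bind in E; setoid_rewrite big_map in E; simpl in E.
transitivity (\sum_(p <- D' h) \sum_(q <- D p.2) G (p.1, 0) (q.1, q.2)).
  by apply: eq_bigr => p _; apply: eq_bigr => -[c d] _; rewrite hi.
by rewrite E.
Qed.

Lemma g2 (G : A * A -> A * A -> U) a :
  (forall p q, G p q = G (p.1, 0) q) -> lin3 (fun a b c => G (a, 0) (b, c)) ->
  \sum_(w <- rho a) \sum_(q <- D w.2) G w q =
  \sum_(p <- D a) \sum_(u <- rho p.1) \sum_(v <- rho p.2) G (u.1 * v.1, 0) (u.2, v.2).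
Proof.
move=> hi hG; rewrite sum_rho.
transitivity (\sum_(p <- D a) \sum_(n <- D' p.2) \sum_(q <- D n.2)
   (fun n q => G (S p.1 * n.1, 0) q) n q).
  by apply: eq_bigr => p _; apply: eq_bigr => n _; apply: eq_bigr => q _; rewrite hi.
setoid_rewrite braceL; try sideb; simpl.
rewrite (coassL hH); try sideb; simpl.
under [LHS]eq_bigr => p _ do under eq_bigr => b _ do rewrite xchg.
setoid_rewrite sum_rho; setoid_rewrite sum_rho; simpl.
do 5 (apply: eq_bigr => ? _).
by congr (G (_, _) _); ring.
Qed.

Lemma rho_co3 (F : A -> A -> A -> U) a : lin3 F ->
  \sum_(w <- rho a) \sum_(v <- rho w.2) F w.1 v.1 v.2 =
  \sum_(w <- rho a) \sum_(q <- D' w.1) F q.1 q.2 w.2.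
Proof.
move=> hF.
pose X := \sum_(p <- D a) \sum_(u <- D' (S p.1)) \sum_(q <- D' p.2) \sum_(r <- D q.2)
   \sum_(v <- rho r.2) F (u.1 * q.1) (u.2 * (r.1 * v.1)) v.2.
transitivity X; last first.
  rewrite /X.
  under [LHS]eq_bigr => p _ do under eq_bigr => u _ do under eq_bigr => q _ do
    [rewrite (g3 (G := fun z => F (u.1 * q.1) (u.2 * z.1) z.2)); last by linb].
  rewrite sum_rho; setoid_rewrite (mulD hH'); try sideb; simpl.
  under [RHS]eq_bigr => p _ do rewrite xchg.
  setoid_rewrite (coassR hH'); try sideb; simpl.
symmetry; rewrite /X.
setoid_rewrite braceL; try sideb; simpl.
under [LHS]eq_bigr => p _ do rewrite xchg.
under [LHS]eq_bigr => p _ do under eq_bigr => b _ do rewrite xchg.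
repeat setoid_rewrite mulrA.
under [LHS]eq_bigr => p _ do under eq_bigr => b _ do under eq_bigr => c _ do
  [rewrite -(mulD hH' (G := fun w => \sum_(n <- D' c.2) \sum_(v <- rho n.2)
       F (w.1 * S c.1 * n.1) (w.2 * v.1) v.2)); last by linb].
rewrite (coassL hH); try sideb; simpl.
under [LHS]eq_bigr => p _ do rewrite xchg.
under [LHS]eq_bigr => p _ do under eq_bigr => c _ do
  [rewrite (antipL hH (F := fun z => \sum_(w <- D' z) \sum_(n <- D' c.2) \sum_(v <- rho n.2)
       F (w.1 * S c.1 * n.1) (w.2 * v.1) v.2)); last by linb].
setoid_rewrite (oneD hH'); try sideb; simpl.
under [LHS]eq_bigr => p _ do rewrite -scaler_sumr.
rewrite (counitL hH (G := fun p => \sum_(c <- D p.2) \sum_(n <- D' c.2) \sum_(v <- rho n.2)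
       F (1 * S c.1 * n.1) (1 * v.1) v.2)) //; last by linb.
rewrite sum_rho /=; do 2 (apply: eq_bigr => ? _); apply: eq_bigr => ? _.
by rewrite !mul1r.
Qed.

Lemma rho_co (G : A * A -> A * A -> U) a :
  (forall p q, G p q = G (p.1, 0) q) -> lin3 (fun a b c => G (a, 0) (b, c)) ->
  \sum_(w <- rho a) \sum_(v <- rho w.2) G w v =
  \sum_(w <- rho a) \sum_(q <- D' w.1) G (q.1, 0) (q.2, w.2).
Proof.
move=> hi hG; have := rho_co3 a hG => /= <-.
by apply: eq_bigr => w _; apply: eq_bigr => -[c d] _; rewrite hi.
Qed.

Lemma c_delta (G : A * A -> U) g : lin2 (fun a b => G (a, b)) ->
  \sum_(q <- D' g) \sum_(w <- cc q.1 q.2) G w = \sum_(q <- D' g) G q.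
Proof.
move=> hG; setoid_rewrite sum_c; setoid_rewrite sum_phi; simpl.
under [LHS]eq_bigr => q _ do rewrite xchg.
under [LHS]eq_bigr => q _ do under eq_bigr => a _ do rewrite xchg.
repeat setoid_rewrite mulrA.
under [LHS]eq_bigr => q _ do under eq_bigr => a _ do under eq_bigr => b _ do
  [rewrite -(rho_mul hH hH' (G := fun w => G (w.1 * b.1, w.2 * b.2))); last by linb].
rewrite (coassL hH'); try sideb; simpl.
under [LHS]eq_bigr => q _ do rewrite xchg.
under [LHS]eq_bigr => q _ do under eq_bigr => b _ do
  [rewrite (antipR hH' (F := fun z => \sum_(w <- rho z) G (w.1 * b.1, w.2 * b.2))); last by linb].
setoid_rewrite (rho_one hH hH'); try sideb; simpl.
under [LHS]eq_bigr => q _ do rewrite -scaler_sumr.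
rewrite (counitL hH' (G := fun q => \sum_(b <- D' q.2) G (1 * b.1, 1 * b.2))) //; last by linb.
by rewrite -[RHS]sum_pair; apply: eq_bigr => ? _; rewrite !mul1r.
Qed.

Lemma c_mul_l (G : A * A -> U) x x' y : lin2 (fun a b => G (a, b)) ->
  \sum_(w <- cc (x * x') y) G w =
  \sum_(v <- rho x) \sum_(v' <- cc x' y) G (v.1 * v'.1, v.2 * v'.2).
Proof.
move=> hG; rewrite -{1}[y]mul1r (c_mul hH hH') // (c_unit_r hH hH') //; linb.
Qed.

Lemma K3 (F : A -> A -> A -> U) g : lin3 F ->
  \sum_(q <- D' g) \sum_(w <- rho q.2) \sum_(z <- cc q.1 w.1) F z.1 z.2 w.2 =
  \sum_(w <- rho g) \sum_(q <- D' w.2) F w.1 q.1 q.2.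
Proof.
move=> hF.
rewrite -(g3 (G := fun q => \sum_(w <- rho q.2) \sum_(z <- cc q.1 w.1) F z.1 z.2 w.2)) /=; last by linb.
setoid_rewrite c_mul_l; try sideb; simpl.
setoid_rewrite rho_co; try sideb; simpl.
under [LHS]eq_bigr => r _ do under eq_bigr => v _ do rewrite xchg.
setoid_rewrite c_delta; try sideb; simpl.
under [RHS]eq_bigr => w _ do [rewrite -(g3 (G := fun q => F w.1 q.1 q.2)); last by linb].
setoid_rewrite g2; try sideb; simpl.
setoid_rewrite rho_co; try sideb; simpl.
under [LHS]eq_bigr => r _ do rewrite xchg.
by [].
Qed.

End Brace3.


Section Abstract.
Variables (k : fieldType) (A : comAlgType k).
Variables (D : A -> seq (A * A)) (e : A -> k) (S : A -> A).
Hypothesis hH : is_hopf D e S.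

Lemma dec1 (U : lmodType k) (G : A -> A -> A -> U) y : lin3 G ->
  \sum_(p <- D y) \sum_(q <- D p.2) G (S p.1 * q.1) q.2 1 = G 1 y 1.
Proof.
move=> hG; rewrite (coassL hH); try side; simpl.
under [LHS]eq_bigr => p _ do [rewrite (antipL hH (F := fun w => G w p.2 1)); last by lin].
by rewrite (counitL hH (G := fun p => G 1 p.2 1)) //; lin.
Qed.

Lemma dec2 (U : lmodType k) (G : A -> A -> A -> U) z : lin3 G ->
  \sum_(p <- D z) \sum_(q <- D (S p.1)) \sum_(a <- D p.2) \sum_(b <- D a.2)
     G (q.1 * a.1) (q.2 * b.1) b.2 = G 1 1 z.
Proof.
move=> hG; setoid_rewrite (coassL hH); try side; simpl.
under [LHS]eq_bigr => p _ do rewrite xchg.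
under [LHS]eq_bigr => p _ do under eq_bigr => a _ do
  [rewrite -(mulD hH (G := fun r => G r.1 r.2 a.2)); last by lin].
rewrite (coassL hH); try side; simpl.
under [LHS]eq_bigr => p _ do
  [rewrite (antipL hH (F := fun w => \sum_(r <- D w) G r.1 r.2 p.2)); last by lin].
setoid_rewrite (oneD hH); try side; simpl.
by rewrite (counitL hH (G := fun p => G 1 1 p.2)) //; lin.
Qed.

Definition goodL (L : A -> A -> A -> seq (A * A * A)) :=
  (forall (U : lmodType k) (f : A -> A -> A -> U), lin3 f ->
     lin3 (fun x y z => \sum_(w <- L x y z) f w.1.1 w.1.2 w.2)) /\
  (forall (U : lmodType k) (f : A -> A -> A -> U), lin3 f -> forall x x' y y' z z',
     \sum_(w <- L (x * x') (y * y') (z * z')) f w.1.1 w.1.2 w.2 =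
     \sum_(w <- L x y z) \sum_(w' <- L x' y' z')
        f (w.1.1 * w'.1.1) (w.1.2 * w'.1.2) (w.2 * w'.2)).

Section NF.
Variable L : A -> A -> A -> seq (A * A * A).
Hypothesis hL : goodL L.
Variable U : lmodType k.
Variable f : A -> A -> A -> U.
Hypothesis hf : lin3 f.

Lemma nf_all x y z :
  \sum_(w <- L x y z) f w.1.1 w.1.2 w.2 =
  \sum_(w <- L x 1 1) \sum_(w' <- L 1 y 1) \sum_(w'' <- L 1 1 z)
     f (w.1.1 * w'.1.1 * w''.1.1) (w.1.2 * w'.1.2 * w''.1.2) (w.2 * w'.2 * w''.2).
Proof.
case: hL => hl hm.
have -> : L x y z = L ((x * 1) * 1) ((1 * y) * 1) ((1 * 1) * z) by rewrite !mulr1 !mul1r.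
rewrite (hm U f hf).
rewrite (hm U (fun a b c => \sum_(w' <- L 1 1 z) f (a * w'.1.1) (b * w'.1.2) (c * w'.2))); last by lin.
apply: eq_bigr => w _; apply: eq_bigr => w' _; apply: eq_bigr => w'' _.
by rewrite ?mulrA.
Qed.

Lemma nf_y y :
  \sum_(w <- L 1 y 1) f w.1.1 w.1.2 w.2 =
  \sum_(p <- D y) \sum_(q <- D p.2) \sum_(w <- L (S p.1) 1 1) \sum_(w' <- L q.1 q.2 1)
     f (w.1.1 * w'.1.1) (w.1.2 * w'.1.2) (w.2 * w'.2).
Proof.
case: hL => hl hm.
rewrite -(dec1 (G := fun a b c => \sum_(w <- L a b c) f w.1.1 w.1.2 w.2)); last exact: hl.
apply: eq_bigr => p _; apply: eq_bigr => q _.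
have -> : L (S p.1 * q.1) q.2 1 = L (S p.1 * q.1) (1 * q.2) (1 * 1) by rewrite !mul1r.
by rewrite (hm U f hf).
Qed.

Lemma nf_z z :
  \sum_(w <- L 1 1 z) f w.1.1 w.1.2 w.2 =
  \sum_(p <- D z) \sum_(q <- D (S p.1)) \sum_(w <- L q.1 q.2 1)
    \sum_(a <- D p.2) \sum_(b <- D a.2) \sum_(w' <- L a.1 b.1 b.2)
     f (w.1.1 * w'.1.1) (w.1.2 * w'.1.2) (w.2 * w'.2).
Proof.
case: hL => hl hm.
rewrite -(dec2 (G := fun a b c => \sum_(w <- L a b c) f w.1.1 w.1.2 w.2)); last exact: hl.
apply: eq_bigr => p _; apply: eq_bigr => q _.
rewrite xchg; apply: eq_bigr => a _; rewrite xchg; apply: eq_bigr => b _.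
have -> : L (q.1 * a.1) (q.2 * b.1) b.2 = L (q.1 * a.1) (q.2 * b.1) (1 * b.2) by rewrite !mul1r.
by rewrite (hm U f hf).
Qed.
End NF.

Section Main.
Variables L1 L2 : A -> A -> A -> seq (A * A * A).
Hypothesis hL1 : goodL L1.
Hypothesis hL2 : goodL L2.
Hypothesis B1 : forall (U : lmodType k) (f : A -> A -> A -> U), lin3 f -> forall x,
  \sum_(w <- L1 x 1 1) f w.1.1 w.1.2 w.2 = \sum_(w <- L2 x 1 1) f w.1.1 w.1.2 w.2.
Hypothesis B2 : forall (U : lmodType k) (f : A -> A -> A -> U), lin3 f -> forall g,
  \sum_(q <- D g) \sum_(w <- L1 q.1 q.2 1) f w.1.1 w.1.2 w.2 =
  \sum_(q <- D g) \sum_(w <- L2 q.1 q.2 1) f w.1.1 w.1.2 w.2.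
Hypothesis B3 : forall (U : lmodType k) (f : A -> A -> A -> U), lin3 f -> forall h,
  \sum_(p <- D h) \sum_(q <- D p.2) \sum_(w <- L1 p.1 q.1 q.2) f w.1.1 w.1.2 w.2 =
  \sum_(p <- D h) \sum_(q <- D p.2) \sum_(w <- L2 p.1 q.1 q.2) f w.1.1 w.1.2 w.2.

Lemma gen2 (U : lmodType k) (f : A -> A -> A -> U) y : lin3 f ->
  \sum_(w <- L1 1 y 1) f w.1.1 w.1.2 w.2 = \sum_(w <- L2 1 y 1) f w.1.1 w.1.2 w.2.
Proof.
move=> hf; rewrite (nf_y hL1 hf) (nf_y hL2 hf).
under [LHS]eq_bigr => p _ do under eq_bigr => q _ do
  [rewrite (B1 (f := fun a b c => \sum_(w' <- L1 q.1 q.2 1)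
       f (a * w'.1.1) (b * w'.1.2) (c * w'.2))); last by lin].
under [LHS]eq_bigr => p _ do rewrite xchg.
under [RHS]eq_bigr => p _ do rewrite xchg.
apply: eq_bigr => p _; apply: eq_bigr => w _.
by rewrite (B2 (f := fun a b c => f (w.1.1 * a) (w.1.2 * b) (w.2 * c))); last by lin.
Qed.

Lemma gen3 (U : lmodType k) (f : A -> A -> A -> U) z : lin3 f ->
  \sum_(w <- L1 1 1 z) f w.1.1 w.1.2 w.2 = \sum_(w <- L2 1 1 z) f w.1.1 w.1.2 w.2.
Proof.
move=> hf; rewrite (nf_z hL1 hf) (nf_z hL2 hf).
under [LHS]eq_bigr => p _ do under eq_bigr => q _ do under eq_bigr => w _ do
  [rewrite (B3 (f := fun a b c => f (w.1.1 * a) (w.1.2 * b) (w.2 * c))); last by lin].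
apply: eq_bigr => p _.
by rewrite (B2 (f := fun a' b' c' => \sum_(a <- D p.2) \sum_(b <- D a.2) \sum_(w' <- L2 a.1 b.1 b.2)
       f (a' * w'.1.1) (b' * w'.1.2) (c' * w'.2))); last by lin.
Qed.

Theorem abstract_braid (U : lmodType k) (f : A -> A -> A -> U) x y z : lin3 f ->
  \sum_(w <- L1 x y z) f w.1.1 w.1.2 w.2 = \sum_(w <- L2 x y z) f w.1.1 w.1.2 w.2.
Proof.
move=> hf; rewrite (nf_all hL1 hf) (nf_all hL2 hf).
under [LHS]eq_bigr => w _ do under eq_bigr => w' _ do
  [rewrite (gen3 (f := fun a b c => f (w.1.1 * w'.1.1 * a) (w.1.2 * w'.1.2 * b) (w.2 * w'.2 * c))); last by lin].
under [LHS]eq_bigr => w _ do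
  [rewrite (gen2 (f := fun a b c => \sum_(w'' <- L2 1 1 z)
      f (w.1.1 * a * w''.1.1) (w.1.2 * b * w''.1.2) (w.2 * c * w''.2))); last by lin].
by rewrite (B1 (f := fun a b c => \sum_(w' <- L2 1 y 1) \sum_(w'' <- L2 1 1 z)
      f (a * w'.1.1 * w''.1.1) (b * w'.1.2 * w''.1.2) (c * w'.2 * w''.2))); last by lin.
Qed.
End Main.

End Abstract.


Section Final.
Variables (k : fieldType) (A : comAlgType k).
Variables (D : A -> seq (A * A)) (e : A -> k) (S : A -> A).
Variables (D' : A -> seq (A * A)) (e' : A -> k) (T : A -> A).
Hypothesis hH : is_hopf D e S.
Hypothesis hH' : is_hopf D' e' T.
Hypothesis hB : forall h : A,
  teq3 (bind (D' h) (fun p => [seq (p.1, q.1, q.2) | q <- D p.2]))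
       (bind (iter_cop D h) (fun t =>
          bind (D' t.1.1) (fun r => [seq (r.1 * S t.1.2 * s.1, r.2, s.2) | s <- D' t.2]))).

Local Notation rho := (hb_rho D S D').
Local Notation cc := (hb_c D S D' T).
Local Notation C12 := (c12 D S D' T).
Local Notation C23 := (c23 D S D' T).

Definition Lseq x y z := C12 (C23 (C12 [:: (x, y, z)])).
Definition Rseq x y z := C23 (C12 (C23 [:: (x, y, z)])).

Lemma sum_C12 (U : lmodType k) (G : A * A * A -> U) t :
  \sum_(w <- C12 t) G w = \sum_(u <- t) \sum_(v <- cc u.1.1 u.1.2) G (v.1, v.2, u.2).
Proof. by rewrite /c12 sum_bind; apply: eq_bigr => u _; rewrite big_map. Qed.

Lemma sum_C23 (U : lmodType k) (G : A * A * A -> U) t :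
  \sum_(w <- C23 t) G w = \sum_(u <- t) \sum_(v <- cc u.1.2 u.2) G (u.1.1, v.1, v.2).
Proof. by rewrite /c23 sum_bind; apply: eq_bigr => u _; rewrite big_map. Qed.

Lemma sum_L (U : lmodType k) (G : A * A * A -> U) x y z :
  \sum_(w <- Lseq x y z) G w =
  \sum_(v <- cc x y) \sum_(w <- cc v.2 z) \sum_(u <- cc v.1 w.1) G (u.1, u.2, w.2).
Proof.
by rewrite /Lseq sum_C12 sum_C23 sum_C12 big_seq1.
Qed.

Lemma sum_R (U : lmodType k) (G : A * A * A -> U) x y z :
  \sum_(w <- Rseq x y z) G w =
  \sum_(v <- cc y z) \sum_(w <- cc x v.1) \sum_(u <- cc w.2 v.2) G (w.1, u.1, u.2).
Proof.
by rewrite /Rseq sum_C23 sum_C12 sum_C23 big_seq1.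
Qed.

Lemma goodL_L : goodL Lseq.
Proof.
split.
  move=> U f hf.
  have h : lin3 (fun x y z => \sum_(v <- cc x y) \sum_(w <- cc v.2 z) \sum_(u <- cc v.1 w.1)
     f u.1 u.2 w.2) by linb.
  have E x y z : \sum_(w <- Lseq x y z) f w.1.1 w.1.2 w.2 =
     \sum_(v <- cc x y) \sum_(w <- cc v.2 z) \sum_(u <- cc v.1 w.1) f u.1 u.2 w.2.
    by rewrite sum_L.
  case: h => h1 h2 h3; split=> *; move=> ? ? ?; rewrite !E; [apply: h1 | apply: h2 | apply: h3].
move=> U f hf x x' y y' z z'.
rewrite sum_L.
setoid_rewrite (c_mul hH hH'); try sideb; simpl.
setoid_rewrite (c_mul hH hH'); try sideb; simpl.
setoid_rewrite (c_mul hH hH'); try sideb; simpl.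
rewrite sum_L; setoid_rewrite sum_L; simpl.
under [LHS]eq_bigr => v _ do rewrite xchg.
under [LHS]eq_bigr => v _ do under eq_bigr => w _ do under eq_bigr => v' _ do rewrite xchg.
under [LHS]eq_bigr => v _ do under eq_bigr => w _ do rewrite xchg.
by [].
Qed.

Lemma goodL_R : goodL Rseq.
Proof.
split.
  move=> U f hf.
  have h : lin3 (fun x y z => \sum_(v <- cc y z) \sum_(w <- cc x v.1) \sum_(u <- cc w.2 v.2)
     f w.1 u.1 u.2) by linb.
  have E x y z : \sum_(w <- Rseq x y z) f w.1.1 w.1.2 w.2 =
     \sum_(v <- cc y z) \sum_(w <- cc x v.1) \sum_(u <- cc w.2 v.2) f w.1 u.1 u.2.
    by rewrite sum_R.
  case: h => h1 h2 h3; split=> *; move=> ? ? ?; rewrite !E; [apply: h1 | apply: h2 | apply: h3].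
move=> U f hf x x' y y' z z'.
rewrite sum_R.
setoid_rewrite (c_mul hH hH'); try sideb; simpl.
setoid_rewrite (c_mul hH hH'); try sideb; simpl.
setoid_rewrite (c_mul hH hH'); try sideb; simpl.
rewrite sum_R; setoid_rewrite sum_R; simpl.
under [LHS]eq_bigr => v _ do rewrite xchg.
under [LHS]eq_bigr => v _ do under eq_bigr => w _ do under eq_bigr => v' _ do rewrite xchg.
under [LHS]eq_bigr => v _ do under eq_bigr => w _ do rewrite xchg.
by [].
Qed.

Lemma b1 (U : lmodType k) (f : A -> A -> A -> U) x : lin3 f ->
  \sum_(w <- Lseq x 1 1) f w.1.1 w.1.2 w.2 = \sum_(w <- Rseq x 1 1) f w.1.1 w.1.2 w.2.
Proof.
move=> hf; rewrite sum_L sum_R.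
rewrite (c_unit_r hH hH'); try sideb.
setoid_rewrite (c_unit_r hH hH'); try sideb.
rewrite (rho_co hH hH' hB); try sideb; simpl.
setoid_rewrite (c_delta hH hH'); try sideb; simpl.
rewrite [RHS](rho_one hH hH'); try sideb; simpl.
rewrite [RHS](c_unit_r hH hH'); try sideb.
setoid_rewrite (c_unit_r hH hH'); try sideb.
rewrite [RHS](rho_co hH hH' hB); try sideb; simpl.
Qed.

Lemma b2 (U : lmodType k) (f : A -> A -> A -> U) g : lin3 f ->
  \sum_(q <- D' g) \sum_(w <- Lseq q.1 q.2 1) f w.1.1 w.1.2 w.2 =
  \sum_(q <- D' g) \sum_(w <- Rseq q.1 q.2 1) f w.1.1 w.1.2 w.2.
Proof.
move=> hf; setoid_rewrite sum_L; setoid_rewrite sum_R; simpl.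
rewrite [LHS](c_delta hH hH'); try sideb; simpl.
setoid_rewrite (c_unit_r hH hH'); try sideb; simpl.
rewrite [LHS](K3 hH hH' hB); try sideb.
rewrite [RHS](K3 hH hH' hB (F := fun a b c => \sum_(u <- cc b c) f a u.1 u.2)); try sideb; simpl.
setoid_rewrite (c_delta hH hH'); try sideb.
Qed.



Lemma b3 (U : lmodType k) (f : A -> A -> A -> U) h : lin3 f ->
  \sum_(p <- D' h) \sum_(q <- D' p.2) \sum_(w <- Lseq p.1 q.1 q.2) f w.1.1 w.1.2 w.2 =
  \sum_(p <- D' h) \sum_(q <- D' p.2) \sum_(w <- Rseq p.1 q.1 q.2) f w.1.1 w.1.2 w.2.
Proof.
move=> hf; setoid_rewrite sum_L; setoid_rewrite sum_R; simpl.
rewrite [LHS](coassL hH'); try sideb; simpl.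
setoid_rewrite (c_delta hH hH'); try sideb; simpl.
rewrite [LHS](coassR hH'); try sideb; simpl.
rewrite [RHS](coassL hH'); try sideb; simpl.
setoid_rewrite (c_delta hH hH'); try sideb; simpl.
rewrite [LHS](coassL hH'); try sideb; simpl.
rewrite [RHS](coassR hH'); try sideb; simpl.
setoid_rewrite (c_delta hH hH'); try sideb; simpl.
by rewrite [RHS](coassL hH'); try sideb.
Qed.

Theorem braid (t : seq (A * A * A)) : teq3 (C12 (C23 (C12 t))) (C23 (C12 (C23 t))).
Proof.
move=> U f hf.
have eL : \sum_(p <- C12 (C23 (C12 t))) f p.1.1 p.1.2 p.2 =
  \sum_(u <- t) \sum_(w <- Lseq u.1.1 u.1.2 u.2) f w.1.1 w.1.2 w.2.
  rewrite sum_C12 sum_C23 sum_C12; apply: eq_bigr => u _; by rewrite sum_L.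
have eR : \sum_(p <- C23 (C12 (C23 t))) f p.1.1 p.1.2 p.2 =
  \sum_(u <- t) \sum_(w <- Rseq u.1.1 u.1.2 u.2) f w.1.1 w.1.2 w.2.
  rewrite sum_C23 sum_C12 sum_C23; apply: eq_bigr => u _; by rewrite sum_R.
rewrite eL eR; apply: eq_bigr => u _.
apply: (abstract_braid hH' goodL_L goodL_R) => //.
- by move=> ? ? ? ?; apply: b1.
- by move=> ? ? ? ?; apply: b2.
- by move=> ? ? ? ?; apply: b3.
Qed.

End Final.

Theorem proposition2p9 (k : fieldType) (A : comAlgType k)
    (D : A -> seq (A * A)) (e : A -> k) (S : A -> A)
    (D' : A -> seq (A * A)) (e' : A -> k) (T : A -> A) :
  hopf_brace D e S D' e' T ->
  forall t : seq (A * A * A),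
    teq3 (c12 D S D' T (c23 D S D' T (c12 D S D' T t)))
         (c23 D S D' T (c12 D S D' T (c23 D S D' T t))).
Proof.
case=> hH hH' hB t.
exact: (braid hH hH' hB t).
Qed.
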